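(* Let $a,b\in\mathbb{C}$ and let $u(\tau)$ be a solution of $$u''=\frac{(u')^2}{u}-\frac{u'}{\tau}+\frac1\tau\bigl(-8u^2+2ab\bigr)+\frac{b^2}{u}.$$ If $\operatorname{Re}u(\tau)>0$ for all $\tau>0$, then $u$ has no poles for $\tau>0$. *)

(* Defs.v *)
(* u is a complex-valued function of the real
   variable tau; derivatives are Coquelicot's is_derive for R -> C
   (C = R*R as a normed R-module). *)
From Stdlib Require Export Reals.
From Coquelicot Require Export Coquelicot.
Open Scope R_scope.

Definition PIII_eq (a b : C) (u du d2u : R -> C) (tau : R) : Prop :=
  is_derive u tau (du tau) /\ is_derive du tau (d2u tau) /\
  d2u tau = Cplus (Cplus (Cplus
              (Cdiv (Cmult (du tau) (du tau)) (u tau))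
              (Copp (Cdiv (du tau) (RtoC tau))))
              (Cmult (Cinv (RtoC tau))
                     (Cplus (Copp (Cmult (RtoC 8) (Cmult (u tau) (u tau))))
                            (Cmult (RtoC 2) (Cmult a b)))))
              (Cdiv (Cmult b b) (u tau)).

Definition is_pole (u : R -> C) (p : R) : Prop :=
  filterlim (fun t => Cmod (u t)) (locally' p) (Rbar_locally p_infty).

Definition isolated_in (P : R -> Prop) (p : R) : Prop :=
  exists eps : R, 0 < eps /\ forall t, 0 < Rabs (t - p) < eps -> ~ P t.

(* Main.v *)
Require Import Defs.
From Stdlib Require Import Reals Lra Psatz.
From Coquelicot Require Import Coquelicot.
Open Scope R_scope.
Lemma dRe (u : R -> C) t l : is_derive u t l -> is_derive (fun s => fst (u s)) t (fst l).
Proof.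
intro H. unfold is_derive in *.
eapply filterdiff_ext_lin.
apply (filterdiff_comp' u fst t (fun y => scal y l) fst H).
apply filterdiff_linear.
split.
- intros [] []; reflexivity.
- intros k []; reflexivity.
- exists 1. split. lra. intros [a b]. simpl.
  pose proof (norm_prod a b). pose proof (Rmax_l (norm a) (norm b)). rewrite Rmult_1_l; eapply Rle_trans; [apply H1|apply H0].
- intros y. destruct l. reflexivity.
Qed.
Lemma dIm (u : R -> C) t l : is_derive u t l -> is_derive (fun s => snd (u s)) t (snd l).
Proof.
intro H. unfold is_derive in *.
eapply filterdiff_ext_lin.
apply (filterdiff_comp' u snd t (fun y => scal y l) snd H).
apply filterdiff_linear.
split.
- intros [] []; reflexivity.
- intros k []; reflexivity.
- exists 1. split. lra. intros [a b]. simpl.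
  pose proof (norm_prod a b). pose proof (Rmax_r (norm a) (norm b)). rewrite Rmult_1_l; eapply Rle_trans; [apply H1|apply H0].
- intros y. destruct l. reflexivity.
Qed.
Lemma key_id (a b uu du d2 : C) (t : R) : 0 < t -> fst uu ^ 2 + snd uu ^ 2 <> 0 ->
  d2 = Cplus (Cplus (Cplus
              (Cdiv (Cmult du du) uu)
              (Copp (Cdiv du (RtoC t))))
              (Cmult (Cinv (RtoC t))
                     (Cplus (Copp (Cmult (RtoC 8) (Cmult uu uu)))
                            (Cmult (RtoC 2) (Cmult a b)))))
              (Cdiv (Cmult b b) uu) ->
  let x := fst uu in let y := snd uu in let x1 := fst du in let y1 := snd du in
  let N := x^2 + y^2 in let A := x*x1 + y*y1 in
  let A' := x1^2 + y1^2 + x * fst d2 + y * snd d2 in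
  let c := Cmult (RtoC 2) (Cmult a b) in let d := Cmult b b in
  (A + t*A')/N - 2*t*A^2/N^2 =
   -8*x + (fst c * x + snd c * y)/N + t*(fst d *(x^2-y^2) + 2 * snd d * x * y)/N^2.
Proof.
intros Ht HN Hd2. subst d2. destruct uu as [x y], du as [x1 y1], a as [a1 a2], b as [b1 b2].
simpl in *. unfold Cdiv, Cplus, Cmult, Cinv, Copp, RtoC. simpl.
field. split; [intro E; apply HN; rewrite <- E; ring | lra].
Qed.
Lemma pole_big (u : R -> C) p : filterlim (fun t => Cmod (u t)) (locally' p) (Rbar_locally p_infty) ->
  forall M, exists d, 0 < d /\ forall t, t <> p -> Rabs (t - p) < d -> M < Cmod (u t).
Proof.
intros H M.
assert (H1 := H (fun y => M < y) (ex_intro _ M (fun x Hx => Hx))).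
destruct H1 as [e He]. exists e. split. apply cond_pos.
intros t Ht Hd. apply He; [|exact Ht]. exact Hd.
Qed.
Lemma deriv_g (x y x1 y1 x2 y2 : R -> R) K t :
  is_derive x t (x1 t) -> is_derive y t (y1 t) -> is_derive x1 t (x2 t) -> is_derive y1 t (y2 t) ->
  x t ^ 2 + y t ^ 2 <> 0 ->
  is_derive (fun s => s * (x s * x1 s + y s * y1 s) / (x s ^ 2 + y s ^ 2) - K * s) t
   (((x t * x1 t + y t * y1 t) + t * (x1 t ^ 2 + y1 t ^ 2 + x t * x2 t + y t * y2 t)) / (x t ^ 2 + y t ^ 2)
     - 2 * t * (x t * x1 t + y t * y1 t) ^ 2 / (x t ^ 2 + y t ^ 2) ^ 2 - K).
Proof.
intros Hx Hy Hx1 Hy1 HN.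
auto_derive.
- repeat split; try (eexists; eassumption). exact HN.
- rewrite (is_derive_unique (fun s : R => _ s) _ _ Hx), (is_derive_unique (fun s : R => _ s) _ _ Hy),
    (is_derive_unique (fun s : R => _ s) _ _ Hx1), (is_derive_unique (fun s : R => _ s) _ _ Hy1).
  field. exact HN.
Qed.
Lemma deriv_h (x y x1 y1 : R -> R) t :
  is_derive x t (x1 t) -> is_derive y t (y1 t) -> 0 < x t ^ 2 + y t ^ 2 ->
  is_derive (fun s => ln (x s ^ 2 + y s ^ 2)) t
   (2 * (x t * x1 t + y t * y1 t) / (x t ^ 2 + y t ^ 2)).
Proof.
intros Hx Hy HN.
auto_derive.
- repeat split; try (eexists; eassumption). exact HN.
- rewrite (is_derive_unique (fun s : R => _ s) _ _ Hx), (is_derive_unique (fun s : R => _ s) _ _ Hy).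
  field. lra.
Qed.
Lemma mul_abs_le a z B : Rabs z <= B -> a * z <= Rabs a * B.
Proof.
intro H. apply Rle_trans with (Rabs (a*z)). apply Rle_abs.
rewrite Rabs_mult. apply Rmult_le_compat_l. apply Rabs_pos. exact H.
Qed.
Lemma div_le u N v : 0 < N -> u <= v * N -> u / N <= v.
Proof.
intros HN H. unfold Rdiv. replace v with (v*N*/N) by (field; lra).
apply Rmult_le_compat_r; [left; apply Rinv_0_lt_compat; lra | exact H].
Qed.
Lemma abs_le_N x y : 1 <= x^2 + y^2 -> Rabs x <= x^2+y^2.
Proof.
intro H. destruct (Rle_dec (Rabs x) 1). lra.
assert (Rabs x <= Rabs x * Rabs x) by nra.
assert (Rabs x ^ 2 = x^2) by apply pow2_abs. nra.
Qed.
Lemma key_bound (c1 c2 d1 d2 x y t p : R) : 0 < t <= p -> 1 <= x^2+y^2 ->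
 (c1*x+c2*y)/(x^2+y^2) + t*(d1*(x^2-y^2)+2*d2*x*y)/(x^2+y^2)^2
   <= (Rabs c1 + Rabs c2) + p*(Rabs d1 + Rabs d2).
Proof.
intros Ht HN.
assert (Hx := abs_le_N x y HN).
assert (Hy := abs_le_N y x ltac:(lra)).
assert (H1 : c1*x + c2*y <= (Rabs c1 + Rabs c2) * (x^2+y^2)).
{ pose proof (mul_abs_le c1 x _ Hx). pose proof (mul_abs_le c2 y _ Hy). nra. }
assert (Hq1 : Rabs (x^2-y^2) <= x^2+y^2).
{ apply Rabs_le. pose proof (pow2_ge_0 (x-y)). pose proof (pow2_ge_0 (x+y)). pose proof (pow2_ge_0 x). pose proof (pow2_ge_0 y). split; nra. }
assert (Hq2 : Rabs (2*x*y) <= x^2+y^2).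
{ apply Rabs_le. pose proof (pow2_ge_0 (x-y)). pose proof (pow2_ge_0 (x+y)). pose proof (pow2_ge_0 x). pose proof (pow2_ge_0 y). split; nra. }
assert (H2 : d1*(x^2-y^2)+2*d2*x*y <= (Rabs d1 + Rabs d2) * ((x^2+y^2)^2)).
{ pose proof (mul_abs_le d1 _ _ Hq1). pose proof (mul_abs_le d2 _ _ Hq2).
  pose proof (Rabs_pos d1). pose proof (Rabs_pos d2).
  assert ((Rabs d1 + Rabs d2) * (x^2+y^2) <= (Rabs d1 + Rabs d2) * ((x^2+y^2)^2)) by (apply Rmult_le_compat_l; nra).
  replace (2*d2*x*y) with (d2*(2*x*y)) by ring. lra. }
apply Rplus_le_compat.
- apply div_le; [lra | exact H1].
- replace (t * (d1 * (x ^ 2 - y ^ 2) + 2 * d2 * x * y) / (x ^ 2 + y ^ 2) ^ 2)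
    with (t * ((d1 * (x ^ 2 - y ^ 2) + 2 * d2 * x * y) / (x ^ 2 + y ^ 2) ^ 2))
    by (field; lra).
  assert (H3 := div_le _ ((x^2+y^2)^2) _ ltac:(nra) H2).
  pose proof (Rabs_pos d1). pose proof (Rabs_pos d2).
  apply Rle_trans with (t * (Rabs d1 + Rabs d2)). apply Rmult_le_compat_l; lra.
  apply Rmult_le_compat_r; lra.
Qed.

Lemma cmod_sq (z : C) : Cmod z ^ 2 = fst z ^ 2 + snd z ^ 2.
Proof. unfold Cmod. apply pow2_sqrt. nra. Qed.

Lemma cont_of_der (f : R -> R) x l : is_derive f x l -> continuity_pt f x.
Proof.
intro H. apply continuity_pt_filterlim. apply (ex_derive_continuous f x).
exists l. exact H.
Qed.

Lemma mvt_le (f df : R -> R) (a t L : R) : a < t ->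
  (forall x, a <= x <= t -> is_derive f x (df x)) ->
  (forall x, a <= x <= t -> df x <= L) ->
  f t - f a <= L * (t - a).
Proof.
intros Hat Hd Hb.
pose proof (MVT_gen f a t df) as M. cbv zeta in M.
rewrite Rmin_left, Rmax_right in M by lra.
destruct M as [c [Hc E]].
- intros x Hx. apply Hd. lra.
- intros x Hx. apply (cont_of_der f x (df x)). apply Hd. lra.
- rewrite E. apply Rmult_le_compat_r. lra. apply Hb. exact Hc.
Qed.

Theorem lemma3 (a b : C) (u du d2u : R -> C) (P : R -> Prop)
  (HP : forall p, 0 < p -> P p -> isolated_in P p /\ is_pole u p)
  (Hsol : forall tau, 0 < tau -> ~ P tau -> PIII_eq a b u du d2u tau)
  (Hre : forall tau, 0 < tau -> ~ P tau -> 0 < Re (u tau)) :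
  forall tau, 0 < tau -> ~ P tau.
Proof.
intros p Hp HPp.
destruct (HP p Hp HPp) as [[eps [Heps Hiso]] Hpole].
destruct (pole_big u p Hpole 1) as [e1 [He1 Hbig1]].
set (d0 := Rmin (Rmin eps e1) p / 2).
assert (Hd0 : 0 < d0 /\ d0 < eps /\ d0 < e1 /\ d0 < p).
{ unfold d0. pose proof (Rmin_l (Rmin eps e1) p). pose proof (Rmin_r (Rmin eps e1) p).
  pose proof (Rmin_l eps e1). pose proof (Rmin_r eps e1).
  assert (0 < Rmin (Rmin eps e1) p) by (repeat apply Rmin_glb_lt; lra). lra. }
set (t0 := p - d0).
set (X := fun s => fst (u s)). set (Y := fun s => snd (u s)).
set (X1 := fun s => fst (du s)). set (Y1 := fun s => snd (du s)).
set (X2 := fun s => fst (d2u s)). set (Y2 := fun s => snd (d2u s)).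
assert (Reg : forall t, t0 <= t < p ->
   0 < t /\ ~ P t /\ 1 < X t ^ 2 + Y t ^ 2 /\ 0 < X t).
{ intros t Ht. unfold t0 in Ht.
  assert (Hab : Rabs (t - p) = p - t) by (rewrite Rabs_left by lra; ring).
  assert (H0 : 0 < t) by lra.
  assert (H1 : ~ P t) by (apply Hiso; rewrite Hab; lra).
  split; [exact H0|]. split; [exact H1|]. split.
  - assert (Hc := Hbig1 t ltac:(lra) ltac:(rewrite Hab; lra)).
    pose proof (cmod_sq (u t)). unfold X, Y. nra.
  - apply Hre; assumption. }
assert (Der : forall t, t0 <= t < p ->
   is_derive X t (X1 t) /\ is_derive Y t (Y1 t) /\ is_derive X1 t (X2 t) /\ is_derive Y1 t (Y2 t)).
{ intros t Ht. destruct (Reg t Ht) as [H0 [H1 _]].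
  destruct (Hsol t H0 H1) as [D1 [D2 _]].
  split; [apply (dRe u t (du t) D1)|]. split; [apply (dIm u t (du t) D1)|].
  split; [apply (dRe du t (d2u t) D2)| apply (dIm du t (d2u t) D2)]. }
set (c := Cmult (RtoC 2) (Cmult a b)). set (d := Cmult b b).
set (K := (Rabs (fst c) + Rabs (snd c)) + p * (Rabs (fst d) + Rabs (snd d))).
assert (HK : 0 <= K).
{ unfold K. pose proof (Rabs_pos (fst c)). pose proof (Rabs_pos (snd c)).
  pose proof (Rabs_pos (fst d)). pose proof (Rabs_pos (snd d)). nra. }
set (g := fun s => s * (X s * X1 s + Y s * Y1 s) / (X s ^ 2 + Y s ^ 2) - K * s).
set (Dg := fun t => ((X t * X1 t + Y t * Y1 t) + t * (X1 t ^ 2 + Y1 t ^ 2 + X t * X2 t + Y t * Y2 t)) / (X t ^ 2 + Y t ^ 2)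
     - 2 * t * (X t * X1 t + Y t * Y1 t) ^ 2 / (X t ^ 2 + Y t ^ 2) ^ 2 - K).
assert (Hg : forall t, t0 <= t < p -> is_derive g t (Dg t)).
{ intros t Ht. destruct (Der t Ht) as [A1 [A2 [A3 A4]]].
  destruct (Reg t Ht) as [_ [_ [HN _]]].
  apply (deriv_g X Y X1 Y1 X2 Y2 K t A1 A2 A3 A4). lra. }
assert (HDg : forall t, t0 <= t < p -> Dg t <= 0).
{ intros t Ht. destruct (Reg t Ht) as [H0 [H1 [HN HX]]].
  destruct (Hsol t H0 H1) as [_ [_ Heq]].
  pose proof (key_id a b (u t) (du t) (d2u t) t H0 ltac:(unfold X, Y in HN; lra) Heq) as E.
  cbv zeta in E.
  pose proof (key_bound (fst c) (snd c) (fst d) (snd d) (X t) (Y t) t p ltac:(lra) ltac:(lra)) as B.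
  unfold Dg. unfold X, Y, X1, Y1, X2, Y2 in *. fold c d in E. fold K in B.
  rewrite E. lra. }
set (M0 := Rabs (g t0) + K * p).
assert (HM0 : 0 <= M0) by (unfold M0; pose proof (Rabs_pos (g t0)); nra).
assert (Hw : forall t, t0 <= t < p ->
   t * (X t * X1 t + Y t * Y1 t) / (X t ^ 2 + Y t ^ 2) <= M0).
{ intros t Ht.
  assert (Hgt : g t <= g t0).
  { destruct (Req_dec t t0) as [E|E]. rewrite E; lra.
    assert (Hm := mvt_le g Dg t0 t 0 ltac:(lra)
      (fun x Hx => Hg x ltac:(lra)) (fun x Hx => HDg x ltac:(lra))). lra. }
  assert (Hgt' : t * (X t * X1 t + Y t * Y1 t) / (X t ^ 2 + Y t ^ 2) - K * t <= g t0) by exact Hgt.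
  unfold M0. pose proof (Rle_abs (g t0)).
  assert (K * t <= K * p) by (apply Rmult_le_compat_l; lra). lra. }
set (h := fun s => ln (X s ^ 2 + Y s ^ 2)).
set (Dh := fun t => 2 * (X t * X1 t + Y t * Y1 t) / (X t ^ 2 + Y t ^ 2)).
set (L := 2 * M0 / t0).
assert (Ht0 : 0 < t0) by (unfold t0; lra).
assert (HL : 0 <= L) by (unfold L; apply Rmult_le_pos; [lra | left; apply Rinv_0_lt_compat; lra]).
assert (Hh : forall t, t0 <= t < p -> is_derive h t (Dh t)).
{ intros t Ht. destruct (Der t Ht) as [A1 [A2 _]].
  destruct (Reg t Ht) as [_ [_ [HN _]]].
  apply (deriv_h X Y X1 Y1 t A1 A2). lra. }
assert (HDh : forall t, t0 <= t < p -> Dh t <= L).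
{ intros t Ht. destruct (Reg t Ht) as [H0 [_ [HN _]]].
  assert (E : Dh t = 2 * (t * (X t * X1 t + Y t * Y1 t) / (X t ^ 2 + Y t ^ 2)) / t)
    by (unfold Dh; field; lra).
  rewrite E. unfold L. unfold Rdiv at 1. unfold Rdiv at 2.
  pose proof (Hw t Ht).
  apply Rle_trans with (2 * M0 * / t).
  - apply Rmult_le_compat_r. left; apply Rinv_0_lt_compat; lra. lra.
  - apply Rmult_le_compat_l. lra. apply Rinv_le_contravar; lra. }
set (B := exp (h t0 + L * p)).
assert (HB : forall t, t0 <= t < p -> X t ^ 2 + Y t ^ 2 <= B).
{ intros t Ht. destruct (Reg t Ht) as [_ [_ [HN _]]].
  assert (Hht : h t <= h t0 + L * p).
  { destruct (Req_dec t t0) as [E|E]. rewrite E; nra.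
    assert (Hm := mvt_le h Dh t0 t L ltac:(lra)
      (fun x Hx => Hh x ltac:(lra)) (fun x Hx => HDh x ltac:(lra))).
    unfold t0 in *. nra. }
  unfold B. rewrite <- (exp_ln (X t ^ 2 + Y t ^ 2)) by lra.
  destruct (Rle_lt_or_eq_dec _ _ Hht) as [Hlt|Heq].
  - left. apply exp_increasing. exact Hlt.
  - right. unfold h in Heq. rewrite Heq. reflexivity. }
destruct (pole_big u p Hpole (B + 1)) as [e2 [He2 Hbig2]].
set (t := p - Rmin d0 e2 / 2).
assert (Hmin : 0 < Rmin d0 e2 /\ Rmin d0 e2 <= d0 /\ Rmin d0 e2 <= e2).
{ split. apply Rmin_glb_lt; lra. split. apply Rmin_l. apply Rmin_r. }
assert (Ht : t0 <= t < p) by (unfold t, t0; lra).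
assert (Hab : Rabs (t - p) = p - t) by (rewrite Rabs_left by (unfold t; lra); ring).
assert (Hc := Hbig2 t ltac:(unfold t; lra) ltac:(rewrite Hab; unfold t; lra)).
pose proof (cmod_sq (u t)). pose proof (HB t Ht).
assert (0 < B) by (unfold B; apply exp_pos).
unfold X, Y in *. nra.
Qed.
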